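(* Let $L$ be a $\kappa$-frame. The map $\nabla_\bullet\colon \mathfrak{H}_\kappa L \to \mathbb{C} L$, $I \mapsto \nabla_I$, is an injective frame homomorphism.
   Context: $\kappa$ is a fixed regular cardinal; a $\kappa$-set is a set of cardinality $<\kappa$. A $\kappa$-frame is a bounded distributive lattice having joins of all $\kappa$-subsets and satisfying $x\wedge\bigvee S=\bigvee_{s\in S}(x\wedge s)$ for $\kappa$-subsets $S$. A $\kappa$-ideal of $L$ is a downset $I\subseteq L$ such that every $\kappa$-subset of $I$ has an upper bound in $I$; $\mathfrak{H}_\kappa L$ is the frame of $\kappa$-ideals of $L$ ordered by inclusion. A congruence on $L$ is an equivalence relation on $L$ which is also a sub-$\kappa$-frame of $L\times L$; $\mathbb{C}L$ denotes the frame of congruences ordered by inclusion. For $a\in L$, $\nabla_a=\{(x,y)\mid x\vee a=y\vee a\}$ (the congruence generated by $(0,a)$), and for a $\kappa$-ideal $I$, $\nabla_I=\bigvee_{a\in I}\nabla_a$ in $\mathbb{C}L$. *)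

(* Defs.v *)
From Stdlib Require Import Classical.

Set Implicit Arguments.

(** * Cardinals.  A cardinal kappa is represented by a type K with |K| = kappa. *)

Definition injective_fun {A B : Type} (f : A -> B) : Prop :=
  forall x y, f x = f y -> x = y.

Definition card_lt (X K : Type) : Prop :=
  (exists f : X -> K, injective_fun f) /\ ~ (exists g : K -> X, injective_fun g).

Definition regular_card (K : Type) : Prop :=
  (exists f : nat -> K, injective_fun f) /\
  (forall (I : Type) (A : I -> Type),
      card_lt I K -> (forall i, card_lt (A i) K) -> card_lt {i : I & A i} K).

Definition kset (K : Type) {T : Type} (S : T -> Prop) : Prop :=
  card_lt {x : T | S x} K.

Definition is_lub {T : Type} (le : T -> T -> Prop) (S : T -> Prop) (s : T) : Prop :=
  (forall x, S x -> le x s) /\ (forall u, (forall x, S x -> le x u) -> le s u).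

Record kFrame (K : Type) := {
  kcar :> Type;
  kle : kcar -> kcar -> Prop;
  kle_refl : forall x, kle x x;
  kle_trans : forall x y z, kle x y -> kle y z -> kle x z;
  kle_antisym : forall x y, kle x y -> kle y x -> x = y;
  kbot : kcar;
  ktop : kcar;
  kmeet : kcar -> kcar -> kcar;
  kjoin : kcar -> kcar -> kcar;
  kbot_le : forall x, kle kbot x;
  kle_top : forall x, kle x ktop;
  kmeet_glb : forall x y z, kle z (kmeet x y) <-> (kle z x /\ kle z y);
  kjoin_lub : forall x y z, kle (kjoin x y) z <-> (kle x z /\ kle y z);
  kdistr : forall x y z, kmeet x (kjoin y z) = kjoin (kmeet x y) (kmeet x z);
  ksup_ex : forall S : kcar -> Prop, kset K S -> exists s, is_lub kle S s;
  kframe_distr : forall (x : kcar) (S : kcar -> Prop) (s : kcar),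
      kset K S -> is_lub kle S s ->
      is_lub kle (fun t => exists u, S u /\ t = kmeet x u) (kmeet x s)
}.

Arguments kle {K} _ _ _.
Arguments kbot {K} _.
Arguments ktop {K} _.
Arguments kmeet {K} _ _ _.
Arguments kjoin {K} _ _ _.

Section Defs.
Variables (K : Type) (L : kFrame K).

Definition kideal (I : L -> Prop) : Prop :=
  (forall x y, kle L x y -> I y -> I x) /\
  (forall S : L -> Prop, kset K S -> (forall x, S x -> I x) ->
     exists u, I u /\ forall x, S x -> kle L x u).

(** Congruences: equivalence relations that are sub-kappa-frames of L x L.
    Joins in L x L are computed componentwise. *)
Definition congruence (C : L -> L -> Prop) : Prop :=
  (forall x, C x x) /\
  (forall x y, C x y -> C y x) /\
  (forall x y z, C x y -> C y z -> C x z) /\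
  C (kbot L) (kbot L) /\ C (ktop L) (ktop L) /\
  (forall a b c d, C a b -> C c d -> C (kmeet L a c) (kmeet L b d)) /\
  (forall a b c d, C a b -> C c d -> C (kjoin L a c) (kjoin L b d)) /\
  (forall (S : (L * L)%type -> Prop) (s t : L),
      kset K S -> (forall p, S p -> C (fst p) (snd p)) ->
      is_lub (kle L) (fun x => exists y, S (x, y)) s ->
      is_lub (kle L) (fun y => exists x, S (x, y)) t ->
      C s t).

Definition nabla (a : L) : L -> L -> Prop :=
  fun x y => kjoin L x a = kjoin L y a.

Definition cong_gen (R : L -> L -> Prop) : L -> L -> Prop :=
  fun x y => forall C, congruence C -> (forall a b, R a b -> C a b) -> C x y.

(** nabla_I = \/_{a in I} nabla_a, the join taken in CL. *)
Definition nablaI (I : L -> Prop) : L -> L -> Prop :=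
  cong_gen (fun x y => exists a, I a /\ nabla a x y).

End Defs.

(** Inclusion orders on H_kappa L (subsets) and CL (relations). *)
Definition set_le {T : Type} (I J : T -> Prop) : Prop := forall x, I x -> J x.
Definition rel_le {T : Type} (R S : T -> T -> Prop) : Prop :=
  forall x y, R x y -> S x y.

Definition lub_in {A X : Type} (leA : A -> A -> Prop) (P : A -> Prop)
  (F : X -> A) (m : A) : Prop :=
  P m /\ (forall j, leA (F j) m) /\
  (forall u, P u -> (forall j, leA (F j) u) -> leA m u).

Definition glb_in {A X : Type} (leA : A -> A -> Prop) (P : A -> Prop)
  (F : X -> A) (m : A) : Prop :=
  P m /\ (forall j, leA m (F j)) /\
  (forall u, P u -> (forall j, leA u (F j)) -> leA u m).

(* Main.v *)
Require Import Defs.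
From Stdlib Require Import Classical ClassicalEpsilon.
Set Implicit Arguments.

Lemma sig_eq' {T : Type} (P : T -> Prop) (x y : {z | P z}) :
  proj1_sig x = proj1_sig y -> x = y.
Proof.
  destruct x as [x px], y as [y py]; simpl; intro H; subst.
  f_equal; apply proof_irrelevance.
Qed.

Lemma kset_inj (K T U : Type) (S : T -> Prop) (S' : U -> Prop)
  (h : {x | S x} -> {y | S' y}) : injective_fun h -> kset K S' -> kset K S.
Proof.
  intros Hh [[f Hf] Hn]. split.
  - exists (fun x => f (h x)). intros x y E. apply Hh, Hf, E.
  - intros [g Hg]. apply Hn. exists (fun k => h (g k)).
    intros x y E. apply Hg, Hh, E.
Qed.

Lemma kset_empty (K T : Type) (HK : regular_card K) : kset K (fun _ : T => False).
Proof.
  destruct HK as [[f Hf] _]. split.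
  - exists (fun x => f 0). intros [x []].
  - intros [g _]. destruct (g (f 0)) as [x []].
Qed.

Lemma kset_two (K T : Type) (HK : regular_card K) (a b : T) :
  kset K (fun x => x = a \/ x = b).
Proof.
  destruct HK as [[f Hf] _]. split.
  - exists (fun p => if excluded_middle_informative (proj1_sig p = a) then f 0 else f 1).
    intros p q. destruct p as [p Hp], q as [q Hq]; simpl.
    destruct (excluded_middle_informative (p = a)), (excluded_middle_informative (q = a));
      intro E; apply sig_eq'; simpl.
    + congruence.
    + apply Hf in E; discriminate.
    + apply Hf in E; discriminate.
    + destruct Hp, Hq; congruence.
  - intros [g Hg].
    assert (Hinj : forall n m, proj1_sig (g (f n)) = proj1_sig (g (f m)) -> n = m).
    { intros n m E. apply Hf, Hg, sig_eq', E. }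
    destruct (proj2_sig (g (f 0))) as [E0|E0];
    destruct (proj2_sig (g (f 1))) as [E1|E1];
    destruct (proj2_sig (g (f 2))) as [E2|E2];
    first [ assert (0 = 1) by (apply Hinj; congruence)
          | assert (0 = 2) by (apply Hinj; congruence)
          | assert (1 = 2) by (apply Hinj; congruence) ]; discriminate.
Qed.


Lemma jl (K : Type) (L : kFrame K) x y : kle L x (kjoin L x y).
Proof. exact (proj1 (proj1 (kjoin_lub L x y _) (kle_refl L _))). Qed.
Lemma jr (K : Type) (L : kFrame K) x y : kle L y (kjoin L x y).
Proof. exact (proj2 (proj1 (kjoin_lub L x y _) (kle_refl L _))). Qed.
Lemma jle (K : Type) (L : kFrame K) x y z : kle L x z -> kle L y z -> kle L (kjoin L x y) z.
Proof. intros; apply kjoin_lub; auto. Qed.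
Lemma ml (K : Type) (L : kFrame K) x y : kle L (kmeet L x y) x.
Proof. exact (proj1 (proj1 (kmeet_glb L x y _) (kle_refl L _))). Qed.
Lemma mr (K : Type) (L : kFrame K) x y : kle L (kmeet L x y) y.
Proof. exact (proj2 (proj1 (kmeet_glb L x y _) (kle_refl L _))). Qed.
Lemma mle (K : Type) (L : kFrame K) x y z : kle L z x -> kle L z y -> kle L z (kmeet L x y).
Proof. intros; apply kmeet_glb; auto. Qed.
Lemma ltr (K : Type) (L : kFrame K) x y z : kle L x y -> kle L y z -> kle L x z.
Proof. apply kle_trans. Qed.
Lemma mcomm (K : Type) (L : kFrame K) x y : kmeet L x y = kmeet L y x.
Proof. apply kle_antisym; apply mle; first [apply ml | apply mr]. Qed.
Lemma jcomm (K : Type) (L : kFrame K) x y : kjoin L x y = kjoin L y x.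
Proof. apply kle_antisym; apply jle; first [apply jl | apply jr]. Qed.

Lemma dual_distr (K : Type) (L : kFrame K) x y z :
  kjoin L x (kmeet L y z) = kmeet L (kjoin L x y) (kjoin L x z).
Proof.
  apply kle_antisym.
  - apply jle.
    + apply mle; apply jl.
    + apply mle; eapply ltr; [apply ml | apply jr | apply mr | apply jr].
  - rewrite kdistr. apply jle.
    + eapply ltr; [apply mr | apply jl].
    + rewrite mcomm, kdistr. apply jle.
      * eapply ltr; [apply mr | apply jl].
      * eapply ltr; [ | apply jr]. rewrite mcomm. apply kle_refl.
Qed.

Definition RI (K : Type) (L : kFrame K) (I : L -> Prop) : L -> L -> Prop :=
  fun x y => exists a, I a /\ nabla L a x y.

Lemma cong_gen_cong (K : Type) (L : kFrame K) R : congruence L (cong_gen L R).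
Proof.
  unfold cong_gen.
  repeat split.
  - intros x C HC _; destruct HC as [HC _]; apply HC.
  - intros x y H C HC HR. pose proof HC as HC0. destruct HC as (_&HC&_). apply HC, H; auto.
  - intros x y z H1 H2 C HC HR. pose proof HC as HC'. destruct HC as (_&_&HC&_). apply (HC x y z); [apply H1 | apply H2]; auto.
  - intros C HC _; destruct HC as (_&_&_&HC&_); apply HC.
  - intros C HC _; destruct HC as (_&_&_&_&HC&_); apply HC.
  - intros a b c d H1 H2 C HC HR. pose proof HC as HC'. destruct HC as (_&_&_&_&_&HC&_). apply HC; [apply H1 | apply H2]; auto.
  - intros a b c d H1 H2 C HC HR. pose proof HC as HC'. destruct HC as (_&_&_&_&_&_&HC&_). apply HC; [apply H1 | apply H2]; auto.
  - intros S s t HS Hp Hs Ht C HC HR. pose proof HC as HC'.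
    destruct HC as (_&_&_&_&_&_&_&HC). eapply HC; eauto.
    intros p Sp. apply Hp; auto.
Qed.

Lemma cong_gen_incl (K : Type) (L : kFrame K) (R : L -> L -> Prop) x y :
  R x y -> cong_gen L R x y.
Proof. intros H C _ HR; auto. Qed.

Lemma kideal_ne (K : Type) (L : kFrame K) I : regular_card K -> kideal L I -> exists a, I a.
Proof.
  intros HK [_ HI]. destruct (HI (fun _ => False) (kset_empty L HK)) as [u [Iu _]]; eauto.
  intros x [].
Qed.

Lemma kideal_join (K : Type) (L : kFrame K) I a b : regular_card K -> kideal L I ->
  I a -> I b -> I (kjoin L a b).
Proof.
  intros HK [Hd HI] Ia Ib.
  destruct (HI (fun x => x = a \/ x = b) (kset_two HK a b)) as [u [Iu Hu]].
  { intros x [->| ->]; auto. }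
  apply (Hd _ u); auto. apply jle; apply Hu; auto.
Qed.

Lemma nabla_mono (K : Type) (L : kFrame K) a c x y :
  kle L a c -> nabla L a x y -> nabla L c x y.
Proof.
  unfold nabla. intros Hac E.
  assert (Hc : c = kjoin L a c) by (apply kle_antisym; [apply jr | apply jle; [auto | apply kle_refl]]).
  assert (Hx : kjoin L x c = kjoin L (kjoin L x a) c).
  { apply kle_antisym.
    - apply jle; [eapply ltr; [apply jl | apply jl] | apply jr].
    - apply jle; [apply jle; [apply jl | eapply ltr; [exact Hac | apply jr]] | apply jr]. }
  assert (Hy : kjoin L y c = kjoin L (kjoin L y a) c).
  { apply kle_antisym.
    - apply jle; [eapply ltr; [apply jl | apply jl] | apply jr].
    - apply jle; [apply jle; [apply jl | eapply ltr; [exact Hac | apply jr]] | apply jr]. }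
  rewrite Hx, Hy, E. reflexivity.
Qed.

Lemma jdist (K : Type) (L : kFrame K) x z c :
  kjoin L (kjoin L x z) c = kjoin L (kjoin L x c) (kjoin L z c).
Proof.
  apply kle_antisym.
  - apply jle; [apply jle|].
    + eapply ltr; [apply jl | apply jl].
    + eapply ltr; [apply jl | apply jr].
    + eapply ltr; [apply jr | apply jl].
  - apply jle; apply jle.
    + eapply ltr; [apply jl | apply jl].
    + apply jr.
    + eapply ltr; [apply jr | apply jl].
    + apply jr.
Qed.

Lemma mdist (K : Type) (L : kFrame K) x z c :
  kjoin L (kmeet L x z) c = kmeet L (kjoin L x c) (kjoin L z c).
Proof.
  rewrite (jcomm L _ c), dual_distr, (jcomm L c x), (jcomm L c z). reflexivity.
Qed.

Lemma RI_cong (K : Type) (L : kFrame K) I : regular_card K -> kideal L I ->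
  congruence L (RI L I).
Proof.
  intros HK HI. unfold RI, nabla.
  repeat split.
  - intros x. destruct (kideal_ne HK HI) as [a Ia]. exists a; split; auto.
  - intros x y [a [Ia E]]. exists a; split; auto.
  - intros x y z [a [Ia E1]] [b [Ib E2]]. exists (kjoin L a b). split.
    + apply kideal_join; auto.
    + apply (@nabla_mono K L a (kjoin L a b)) in E1; [|apply jl].
      apply (@nabla_mono K L b (kjoin L a b)) in E2; [|apply jr].
      unfold nabla in *. rewrite E1; exact E2.
  - destruct (kideal_ne HK HI) as [a Ia]. exists a; split; auto.
  - destruct (kideal_ne HK HI) as [a Ia]. exists a; split; auto.
  - intros x y z w [a [Ia E1]] [b [Ib E2]]. exists (kjoin L a b). split.
    + apply kideal_join; auto.
    + apply (@nabla_mono K L a (kjoin L a b)) in E1; [|apply jl].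
      apply (@nabla_mono K L b (kjoin L a b)) in E2; [|apply jr].
      unfold nabla in *. rewrite !mdist, E1, E2. reflexivity.
  - intros x y z w [a [Ia E1]] [b [Ib E2]]. exists (kjoin L a b). split.
    + apply kideal_join; auto.
    + apply (@nabla_mono K L a (kjoin L a b)) in E1; [|apply jl].
      apply (@nabla_mono K L b (kjoin L a b)) in E2; [|apply jr].
      unfold nabla in *. rewrite (jdist L x z), (jdist L y w), E1, E2. reflexivity.
  - intros S s t HS Hp Hs Ht.
    assert (Hw : forall q : {p | S p}, {a | I a /\ kjoin L (fst (proj1_sig q)) a = kjoin L (snd (proj1_sig q)) a})
      by (intro q; apply constructive_indefinite_description, Hp, proj2_sig).
    set (T := fun a => exists q, proj1_sig (Hw q) = a).
    assert (HT : kset K T).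
    { assert (Hc: forall r : {a | T a}, {q : {p|S p} | proj1_sig (Hw q) = proj1_sig r})
        by (intro r; apply constructive_indefinite_description, proj2_sig).
      apply (@kset_inj K _ _ T S (fun r => proj1_sig (Hc r))); auto.
      intros r1 r2 E. apply sig_eq'.
      rewrite <- (proj2_sig (Hc r1)), <- (proj2_sig (Hc r2)), E. reflexivity. }
    destruct HI as [Hd HI'].
    destruct (HI' T HT) as [c [Ic Hc]].
    { intros a [q <-]. apply (proj1 (proj2_sig (Hw q))). }
    exists c; split; auto.
    assert (Hpc : forall p, S p -> kjoin L (fst p) c = kjoin L (snd p) c).
    { intros p Sp. set (q := exist _ p Sp : {p | S p}).
      apply (@nabla_mono K L (proj1_sig (Hw q)) c).
      - apply Hc. exists q; reflexivity.
      - exact (proj2 (proj2_sig (Hw q))). }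
    apply kle_antisym; apply jle; try apply jr.
    + apply (proj2 Hs). intros x [y Sxy]. apply (@ltr K L _ (kjoin L x c)); [apply jl|].
      pose proof (Hpc (x,y) Sxy) as E; simpl in E; rewrite E.
      apply jle; [eapply ltr; [apply (proj1 Ht); exists x; exact Sxy | apply jl] | apply jr].
    + apply (proj2 Ht). intros y [x Sxy]. apply (@ltr K L _ (kjoin L y c)); [apply jl|].
      pose proof (Hpc (x,y) Sxy) as E; simpl in E; rewrite <- E.
      apply jle; [eapply ltr; [apply (proj1 Hs); exists y; exact Sxy | apply jl] | apply jr].
Qed.

Lemma nablaI_RI (K : Type) (L : kFrame K) I x y : regular_card K -> kideal L I ->
  nablaI L I x y -> RI L I x y.
Proof. intros HK HI H. apply H; [apply RI_cong; auto | auto]. Qed.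

Lemma jbot (K : Type) (L : kFrame K) b : kjoin L (kbot L) b = b.
Proof. apply kle_antisym; [apply jle; [apply kbot_le | apply kle_refl] | apply jr]. Qed.
Lemma botj (K : Type) (L : kFrame K) b : kjoin L b (kbot L) = b.
Proof. rewrite jcomm; apply jbot. Qed.
Lemma jid (K : Type) (L : kFrame K) b : kjoin L b b = b.
Proof. apply kle_antisym; [apply jle; apply kle_refl | apply jr]. Qed.

Lemma RI_self (K : Type) (L : kFrame K) (I : L -> Prop) a : I a -> RI L I a (kbot L).
Proof. intros Ia; exists a; split; auto. unfold nabla. rewrite jbot, jid. reflexivity. Qed.

Lemma nablaI_mono (K : Type) (L : kFrame K) (I J : L -> Prop) :
  set_le I J -> rel_le (nablaI L I) (nablaI L J).
Proof.
  intros HIJ x y H C HC HR. apply H; auto.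
  intros a b [c [Ic E]]. apply HR. exists c; auto.
Qed.

Lemma is_lub_ext (K : Type) (L : kFrame K) (P Q : L -> Prop) s :
  (forall x, P x <-> Q x) -> is_lub (kle L) P s -> is_lub (kle L) Q s.
Proof.
  intros E [H1 H2]; split.
  - intros x Qx; apply H1, E, Qx.
  - intros u Hu; apply H2; intros x Px; apply Hu, E, Px.
Qed.

Lemma S'_fst (K : Type) (L : kFrame K) (S : L -> Prop) (p : L * L) :
  (exists x, S x /\ p = (x, kbot L)) -> S (fst p).
Proof. intros [x [Sx ->]]; exact Sx. Qed.

Lemma ker_ideal (K : Type) (L : kFrame K) (u : L -> L -> Prop) :
  congruence L u -> kideal L (fun a => u a (kbot L)).
Proof.
  intros Hu. pose proof Hu as (Hr&Hs&Ht&Hb&Htop&Hm&Hj&Hk). split.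
  - intros x y Hxy Uy. pose proof (Hm y (kbot L) x x Uy (Hr x)) as H.
    replace (kmeet L y x) with x in H by (apply kle_antisym; [apply mle; auto; apply kle_refl | apply mr]).
    replace (kmeet L (kbot L) x) with (kbot L) in H by (apply kle_antisym; [apply kbot_le | apply ml]).
    exact H.
  - intros S HS HSu. destruct (@ksup_ex K L S HS) as [s Hs'].
    exists s; split; [| apply Hs'].
    set (S' := fun p : L * L => exists x, S x /\ p = (x, kbot L)).
    apply (Hk S').
    + apply (@kset_inj K _ _ S' S (fun p : {p | S' p} => exist S (fst (proj1_sig p)) (@S'_fst K L S _ (proj2_sig p)))); auto.
      intros [p1 H1] [p2 H2] E. apply sig_eq'. simpl in *.
      injection E as E. destruct H1 as [x1 [_ ->]], H2 as [x2 [_ ->]]. simpl in E. subst; reflexivity.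
    + intros p [x [Sx ->]]. simpl. apply HSu, Sx.
    + revert Hs'. apply is_lub_ext. intros x; split.
      * intros Sx. exists (kbot L). exists x; auto.
      * intros [y [x' [Sx' E]]]. injection E as -> ->. exact Sx'.
    + split.
      * intros y [x [x' [_ E]]]. injection E as -> ->. apply kle_refl.
      * intros; apply kbot_le.
Qed.

Lemma full_ideal (K : Type) (L : kFrame K) : kideal L (fun _ => True).
Proof. split; auto. intros S _ _. exists (ktop L); split; auto. intros; apply kle_top. Qed.

Lemma cap_ideal (K : Type) (L : kFrame K) I J : kideal L I -> kideal L J ->
  kideal L (fun a => I a /\ J a).
Proof.
  intros [Id Ik] [Jd Jk]. split.
  - intros x y Hxy [Iy Jy]; split; eauto.
  - intros S HS HSu.
    destruct (Ik S HS) as [u1 [Iu1 H1]]; [intros x Sx; apply HSu, Sx|].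
    destruct (Jk S HS) as [u2 [Ju2 H2]]; [intros x Sx; apply HSu, Sx|].
    exists (kmeet L u1 u2); split.
    + split; [apply (Id _ u1) | apply (Jd _ u2)]; auto; [apply ml | apply mr].
    + intros x Sx; apply mle; auto.
Qed.

Lemma jtop (K : Type) (L : kFrame K) x : kjoin L x (ktop L) = ktop L.
Proof. apply kle_antisym; [apply kle_top | apply jr]. Qed.

Theorem mainTheorem2 (K : Type) (HK : regular_card K) (L : kFrame K) :
  (* nabla_I is a congruence (the map lands in CL) *)
  (forall I, kideal L I -> congruence L (nablaI L I)) /\
  (* injective *)
  (forall I J, kideal L I -> kideal L J ->
     (forall x y, nablaI L I x y <-> nablaI L J x y) ->
     forall a, I a <-> J a) /\
  (* preserves the top element (empty meet) *)
  (forall M, glb_in set_le (kideal L) (fun e : Empty_set => match e with end) M ->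
     glb_in rel_le (congruence L) (fun e : Empty_set => match e with end)
       (nablaI L M)) /\
  (* preserves binary meets *)
  (forall I J M, kideal L I -> kideal L J ->
     glb_in set_le (kideal L) (fun b : bool => if b then I else J) M ->
     glb_in rel_le (congruence L)
       (fun b : bool => if b then nablaI L I else nablaI L J) (nablaI L M)) /\
  (* preserves arbitrary joins *)
  (forall (X : Type) (F : X -> L -> Prop) M,
     (forall j, kideal L (F j)) ->
     lub_in set_le (kideal L) F M ->
     lub_in rel_le (congruence L) (fun j => nablaI L (F j)) (nablaI L M)).
Proof.
  split; [| split; [| split; [| split]]].
  - intros I _; apply cong_gen_cong.
  - assert (Hinj : forall I J, kideal L I -> kideal L J ->
       (forall x y, nablaI L I x y -> nablaI L J x y) -> forall a, I a -> J a).
    { intros I J HI HJ H a Ia.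
      pose proof (nablaI_RI HK HJ (H _ _ (cong_gen_incl _ _ _ (RI_self L I a Ia)))) as [b [Jb E]].
      apply (proj1 HJ a b); auto. unfold nabla in E. rewrite jbot in E.
      rewrite <- E. apply jl. }
    intros I J HI HJ H a; split; apply Hinj; auto; intros x y; apply H.
  - intros M [HM [_ HMt]]. split; [apply cong_gen_cong | split; [intros [] |]].
    intros u _ _ x y _ C HC HR. apply HR. exists (ktop L). split.
    + apply (HMt (fun _ => True)); [apply full_ideal | intros [] | exact I].
    + unfold nabla. rewrite !jtop. reflexivity.
  - intros I J M HI HJ [HM [HMle HMg]].
    split; [apply cong_gen_cong | split].
    + intros [|]; apply nablaI_mono; apply (HMle true) || apply (HMle false).
    + intros u _ Hu x y Uxy.
      destruct (nablaI_RI HK HI (Hu true _ _ Uxy)) as [a [Ia E1]].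
      destruct (nablaI_RI HK HJ (Hu false _ _ Uxy)) as [b [Jb E2]].
      apply cong_gen_incl. exists (kmeet L a b). split.
      * apply (HMg (fun c => I c /\ J c)); [apply cap_ideal; auto | | split].
        -- intros [|] c [Ic Jc]; auto.
        -- apply (proj1 HI _ a); auto; apply ml.
        -- apply (proj1 HJ _ b); auto; apply mr.
      * unfold nabla in *. rewrite !dual_distr, E1, E2. reflexivity.
  - intros X F M HF [HM [HFM HMl]].
    split; [apply cong_gen_cong | split].
    + intros j; apply nablaI_mono, HFM.
    + intros u Hu HFu x y HMxy. apply HMxy; auto.
      intros x' y' [a [Ma E]].
      pose proof Hu as (Hr&Hs&Ht&Hb&Htop&Hm&Hj&Hk).
      assert (Ua : u a (kbot L)).
      { apply (HMl (fun a => u a (kbot L))); [apply ker_ideal; auto | | exact Ma].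
        intros j c Fc. apply (HFu j). apply cong_gen_incl, RI_self, Fc. }
      assert (Hx : forall z, u (kjoin L z a) z).
      { intros z. pose proof (Hj z z a (kbot L) (Hr z) Ua) as H. rewrite botj in H. exact H. }
      unfold nabla in E.
      apply (Ht _ (kjoin L x' a)); [apply Hs, Hx|]. rewrite E. apply Hx.
Qed.
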